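(* Let $k,l$ be positive integers and $r:=k+l-1$. Then a set $S_{k,l}$ (in the sense of the recursive definition below) can be chosen to be a subset of $P_r$; more precisely, choosing at each recursive step the translation parameters $\delta_{k',l'}:=\delta_{k'+l'-1}$ and $\delta_{k',l'}':=\delta_{k'+l'-1}'$ yields valid choices (i.e., the required conditions ''to the right of'' and ''high above'' hold), and the resulting set $S_{k,l}$ is contained in $P_r$.
   Context: Define finite sets $P_r\subset\mathbb{Z}^2$ for integers $r\ge 0$ recursively: $P_0:=\{(0,0)\}$; for $r\ge 1$, $L_r:=P_{r-1}$, $R_r:=\{(x+\delta_r,\,y+\delta_r'):(x,y)\in L_r\}$ and $P_r:=L_r\cup R_r$, where $\delta_r:=3\cdot 4^{r-1}$ and $\delta_r':=(3r+1)\cdot 4^{r-1}$. For finite point sets $X,Y$ in the plane, $X$ is high above $Y$ if every line determined by two points of $X$ lies strictly above every point of $Y$, and every line determined by two points of $Y$ lies strictly below every point of $X$. The sets $S_{k,l}$ (for positive integers $k,l$) are defined recursively: $S_{k,l}:=\{(0,0)\}$ if $k\le 2$ or $l\le 2$; otherwise $S_{k,l}:=L_{k,l}\cup R_{k,l}$ where $L_{k,l}:=S_{k-1,l}$ and $R_{k,l}:=\{(x+\delta_{k,l},\,y+\delta_{k,l}'):(x,y)\in S_{k,l-1}\}$, with $\delta_{k,l}$ chosen so that every point of $R_{k,l}$ lies strictly to the right of every point of $L_{k,l}$, and $\delta_{k,l}'$ chosen so that $R_{k,l}$ is high above $L_{k,l}$. *)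

(* Defs.v *)
From mathcomp Require Import all_boot all_order all_algebra.
Set Implicit Arguments. Unset Strict Implicit. Unset Printing Implicit Defensive.
Import Order.TTheory GRing.Theory Num.Theory.
Local Open Scope ring_scope.

(* Points of Z^2; finite point sets are represented by sequences. *)
Definition pt := (int * int)%type.

Definition shift (a b : int) (X : seq pt) : seq pt :=
  [seq (x.1 + a, x.2 + b) | x <- X].

Definition delta (r : nat) : int := ((3 * 4 ^ r.-1)%N)%:Z.
Definition delta' (r : nat) : int := (((3 * r + 1) * 4 ^ r.-1)%N)%:Z.

Fixpoint P (r : nat) : seq pt :=
  match r with
  | 0%N => [:: (0, 0)]
  | r'.+1 => P r' ++ shift (delta r'.+1) (delta' r'.+1) (P r')
  end.

(* Point y lies strictly below the line through p and q (p, q with distinct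
   x-coordinates; a vertical line is never "above" a point). *)
Definition strictly_below_line (p q y : pt) : Prop :=
  p.1 != q.1 /\
  (y.2 - p.2) * (q.1 - p.1) ^+ 2 < (q.2 - p.2) * (y.1 - p.1) * (q.1 - p.1).

Definition strictly_above_line (p q y : pt) : Prop :=
  p.1 != q.1 /\
  (y.2 - p.2) * (q.1 - p.1) ^+ 2 > (q.2 - p.2) * (y.1 - p.1) * (q.1 - p.1).

Definition high_above (X Y : seq pt) : Prop :=
  (forall p q y, p \in X -> q \in X -> p != q -> y \in Y ->
     strictly_below_line p q y) /\
  (forall p q x, p \in Y -> q \in Y -> p != q -> x \in X ->
     strictly_above_line p q x).

Definition right_of (R L : seq pt) : Prop :=
  forall x y, x \in R -> y \in L -> y.1 < x.1.

Fixpoint S (k : nat) : nat -> seq pt :=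
  match k with
  | 0%N => fun _ => [:: (0, 0)]
  | k'.+1 => fix S2 (l : nat) : seq pt :=
      match l with
      | 0%N => [:: (0, 0)]
      | l'.+1 =>
          if (k'.+1 <= 2)%N || (l'.+1 <= 2)%N then [:: (0, 0)]
          else S k' l'.+1 ++
               shift (delta (k'.+1 + l'.+1).-1) (delta' (k'.+1 + l'.+1).-1) (S2 l')
      end
  end.

Definition SL (k l : nat) : seq pt := S k.-1 l.
Definition SR (k l : nat) : seq pt :=
  shift (delta (k + l).-1) (delta' (k + l).-1) (S k l.-1).

(* Main.v *)
Require Import Defs.
From mathcomp Require Import all_boot all_order all_algebra.
From mathcomp Require Import zify ring lra.
Import Order.TTheory GRing.Theory Num.Theory.
Local Open Scope ring_scope.

Lemma P_succ m : P m.+1 = P m ++ shift (delta m.+1) (delta' m.+1) (P m).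
Proof. by []. Qed.
Lemma delta_eq m : delta m.+1 = 3 * (4 ^ m)%N%:Z.
Proof. by rewrite /delta /= PoszM. Qed.
Lemma delta'_eq m : delta' m.+1 = (3 * m%:Z + 4) * (4 ^ m)%N%:Z.
Proof. rewrite /delta' /= PoszM; congr (_ * _); lia. Qed.
Lemma mem_shift a b X z : z \in shift a b X -> exists2 w, w \in X & z = (w.1 + a, w.2 + b).
Proof. by move/mapP. Qed.

Definition Inv (M N : int) (u : pt) := 0 <= u.1 <= N - 1 /\ 0 <= (M+1)*u.1 - u.2 <= N - M - 1.

Lemma arith1 (M N a b : int) : 0 <= M -> 1 <= N -> Inv M N (a, b) ->
  Inv (1 + M) (4 * N) (a + 3 * N, b + (3 * M + 4) * N).
Proof.
rewrite /Inv /= => *.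
have -> : (1 + M + 1)*(a + 3*N) - (b + (3 * M + 4) * N) = ((M+1)*a - b) + a + 2 * N by ring.
lia.
Qed.
Lemma arith2 (M N a b : int) : 0 <= M -> 1 <= N -> Inv M N (a, b) -> Inv (1 + M) (4 * N) (a, b).
Proof.
rewrite /Inv /= => *.
have -> : (1 + M + 1)*a - b = ((M+1)*a - b) + a by ring.
lia.
Qed.

Lemma pos4 m : 1 <= (4^m)%N%:Z. Proof. by rewrite lez_nat expn_gt0. Qed.
Lemma N4 m : (4^m.+1)%N%:Z = 4 * (4^m)%N%:Z. Proof. by rewrite expnS PoszM. Qed.

Lemma inv m u : u \in P m -> Inv m%:Z (4^m)%N%:Z u.
Proof.
elim: m u => [|m IH] u.
  by rewrite inE => /eqP ->.
rewrite N4 intS P_succ mem_cat delta_eq delta'_eq => /orP [/IH|/mem_shift [w /IH Hw ->]].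
  case: u => a b; apply: arith2 => //; exact: pos4.
case: w Hw => a b /=; apply: arith1 => //; exact: pos4.
Qed.

Lemma slope_ar (M N u1 u2 w1 w2 : int) : 0 <= M -> 1 <= N -> Inv M N (u1, u2) -> Inv M N (w1, w2) ->
  (w2 + (3 * M + 4) * N) - u2 < (1 + M + 1) * ((w1 + 3 * N) - u1).
Proof.
rewrite /Inv /= => *.
rewrite -subr_gt0.
have -> : (1 + M + 1) * ((w1 + 3 * N) - u1) - ((w2 + (3 * M + 4) * N) - u2)
  = 2 * N + ((M + 1) * w1 - w2 + w1) - ((M+1) * u1 - u2 + u1) by ring.
lia.
Qed.

Lemma slope_ar2 (M a b c d : int) : 0 <= M -> a < c -> d - b < (M+1)*(c - a) ->
  d - b < (1 + M + 1) * (c - a).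
Proof.
move=> *.
rewrite -subr_gt0.
have -> : (1 + M + 1) * (c - a) - (d - b) = ((M+1)*(c-a) - (d - b)) + (c - a) by ring.
lia.
Qed.

Lemma slope m u v : u \in P m -> v \in P m -> u.1 < v.1 -> v.2 - u.2 < (m%:Z+1)*(v.1-u.1).
Proof.
elim: m u v => [|m IH] u v.
  by rewrite !inE => /eqP -> /eqP ->.
rewrite intS P_succ !mem_cat delta_eq delta'_eq.
move=> /orP [Hu|/mem_shift [w Hw ->]] /orP [Hv|/mem_shift [w' Hw' ->]] /=.
- move=> h; apply: (@slope_ar2 m%:Z) => //; exact: IH.
- move=> _; case: u Hu => a b Hu; case: w' Hw' => a' b' Hw' /=.
  apply: slope_ar => //; [exact: pos4|exact: inv|exact: inv].
- have := @inv _ _ Hw; have := @inv _ _ Hv; rewrite /Inv.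
  have := pos4 m. lia.
- move=> h.
  have -> : w'.2 + (3 * m%:Z + 4) * (4 ^ m)%N%:Z - (w.2 + (3 * m%:Z + 4) * (4 ^ m)%N%:Z) = w'.2 - w.2 by ring.
  have -> : w'.1 + 3 * (4 ^ m)%N%:Z - (w.1 + 3 * (4 ^ m)%N%:Z) = w'.1 - w.1 by ring.
  apply: (@slope_ar2 m%:Z); [exact: le0z_nat|by rewrite ltrD2r in h|apply: IH => //; by rewrite ltrD2r in h].
Qed.

Lemma distinct m u v : u \in P m -> v \in P m -> u.1 = v.1 -> u = v.
Proof.
elim: m u v => [|m IH] u v.
  by rewrite !inE => /eqP -> /eqP ->.
rewrite P_succ !mem_cat delta_eq.
move=> /orP [Hu|/mem_shift [w Hw ->]] /orP [Hv|/mem_shift [w' Hw' ->]] /=.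
- exact: IH.
- move=> h; exfalso; move: h (pos4 m) (@inv _ _ Hu) (@inv _ _ Hw'); rewrite /Inv; move: (4^m)%N%:Z => N; lia.
- move=> h; exfalso; move: h (pos4 m) (@inv _ _ Hw) (@inv _ _ Hv); rewrite /Inv; move: (4^m)%N%:Z => N; lia.
- move=> h. have h' : w.1 = w'.1 by apply: (addIr _ h).
  by rewrite (IH _ _ Hw Hw' h').
Qed.
Lemma core (c e f g D : int) : 0 < e -> c*e < f -> g < c*D -> 0 < D -> g*e*D < f*D*D.
Proof.
move=> he hf hg hD.
have h1 : g*e < c*D*e by rewrite ltr_pM2r.
have h2 : c*D*e < f*D by rewrite -mulrA (mulrC D) mulrA ltr_pM2r.
have h3 : g*e < f*D by apply: lt_trans h1 h2.
by rewrite ltr_pM2r.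
Qed.

Lemma below_gen c (p q y : pt) : y.1 < p.1 -> c*(p.1-y.1) < p.2-y.2 ->
  (p.1 < q.1 -> q.2-p.2 < c*(q.1-p.1)) -> (q.1 < p.1 -> p.2-q.2 < c*(p.1-q.1)) ->
  p.1 != q.1 -> strictly_below_line p q y.
Proof.
case: p => p1 p2; case: q => q1 q2; case: y => y1 y2 /= hyp hc h1 h2 hne.
split => //=.
case: (ltgtP p1 q1) hne => // hpq _.
  have := @core c (p1 - y1) (p2 - y2) (q2 - p2) (q1 - p1) _ hc (h1 hpq).
  rewrite !subr_gt0 => /(_ hyp hpq) H.
  have -> : (y2 - p2) * (q1 - p1) ^+ 2 = - ((p2 - y2) * (q1 - p1) * (q1 - p1)) by ring.
  have -> : (q2 - p2) * (y1 - p1) * (q1 - p1) = - ((q2 - p2) * (p1 - y1) * (q1 - p1)) by ring.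
  by rewrite ltrN2.
have := @core c (p1 - y1) (p2 - y2) (p2 - q2) (p1 - q1) _ hc (h2 hpq).
rewrite !subr_gt0 => /(_ hyp hpq) H.
have -> : (y2 - p2) * (q1 - p1) ^+ 2 = - ((p2 - y2) * (p1 - q1) * (p1 - q1)) by ring.
have -> : (q2 - p2) * (y1 - p1) * (q1 - p1) = - ((p2 - q2) * (p1 - y1) * (p1 - q1)) by ring.
by rewrite ltrN2.
Qed.

Lemma above_gen c (p q x : pt) : p.1 < x.1 -> c*(x.1-p.1) < x.2-p.2 ->
  (p.1 < q.1 -> q.2-p.2 < c*(q.1-p.1)) -> (q.1 < p.1 -> p.2-q.2 < c*(p.1-q.1)) ->
  p.1 != q.1 -> strictly_above_line p q x.
Proof.
case: p => p1 p2; case: q => q1 q2; case: x => x1 x2 /= hyp hc h1 h2 hne.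
split => //=.
case: (ltgtP p1 q1) hne => // hpq _.
  have := @core c (x1 - p1) (x2 - p2) (q2 - p2) (q1 - p1) _ hc (h1 hpq).
  rewrite !subr_gt0 => /(_ hyp hpq) H.
  have -> : (x2 - p2) * (q1 - p1) ^+ 2 = ((x2 - p2) * (q1 - p1) * (q1 - p1)) by ring.
  by [].
have := @core c (x1 - p1) (x2 - p2) (p2 - q2) (p1 - q1) _ hc (h2 hpq).
rewrite !subr_gt0 => /(_ hyp hpq) H.
have -> : (x2 - p2) * (q1 - p1) ^+ 2 = ((x2 - p2) * (p1 - q1) * (p1 - q1)) by ring.
have -> : (q2 - p2) * (x1 - p1) * (q1 - p1) = ((p2 - q2) * (x1 - p1) * (p1 - q1)) by ring.
by [].
Qed.
Lemma cross_ar (M N y1 y2 w1 w2 : int) : 0 <= M -> 1 <= N -> Inv M N (y1, y2) -> Inv M N (w1, w2) ->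
  y1 < w1 + 3 * N /\ (M + 1) * ((w1 + 3 * N) - y1) < (w2 + (3 * M + 4) * N) - y2.
Proof.
rewrite /Inv /= => *; split; first lia.
rewrite -subr_gt0.
have -> : (w2 + (3 * M + 4) * N) - y2 - (M + 1) * ((w1 + 3 * N) - y1)
  = N - ((M + 1) * w1 - w2) + ((M+1) * y1 - y2) by ring.
lia.
Qed.

Lemma cross m (y w : pt) : y \in P m -> w \in P m ->
  y.1 < w.1 + 3 * (4^m)%N%:Z /\
  (m%:Z + 1) * ((w.1 + 3 * (4^m)%N%:Z) - y.1) < (w.2 + (3 * m%:Z + 4) * (4^m)%N%:Z) - y.2.
Proof.
move=> Hy Hw; case: y Hy => y1 y2 Hy; case: w Hw => w1 w2 Hw /=.
apply: cross_ar; [exact: le0z_nat|exact: pos4|exact: (@inv m)|exact: (@inv m)].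
Qed.

Arguments cross {m y w}.
Arguments slope {m u v}.
Arguments distinct {m u v}.

Lemma sep m X Y : {subset X <= P m} -> {subset Y <= P m} ->
  right_of (shift (delta m.+1) (delta' m.+1) X) Y /\ high_above (shift (delta m.+1) (delta' m.+1) X) Y.
Proof.
move=> sX sY; rewrite delta_eq delta'_eq; split; [|split].
- move=> x y /mem_shift [w /sX Hw ->] /sY Hy /=.
  by case: (cross Hy Hw).
- move=> p q y /mem_shift [w /sX Hw ->] /mem_shift [w' /sX Hw' ->] hne /sY Hy.
  have hw : w.1 != w'.1.
    apply/negP => /eqP e; move: hne; by rewrite (distinct Hw Hw' e) eqxx.
  have [c1 c2] := cross Hy Hw.
  apply: (@below_gen (m%:Z + 1)) => //=.
  + move=> h. rewrite ltrD2r in h.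
    have -> : w'.2 + (3 * m%:Z + 4) * (4 ^ m)%N%:Z - (w.2 + (3 * m%:Z + 4) * (4 ^ m)%N%:Z) = w'.2 - w.2 by ring.
    have -> : w'.1 + 3 * (4 ^ m)%N%:Z - (w.1 + 3 * (4 ^ m)%N%:Z) = w'.1 - w.1 by ring.
    exact: slope Hw Hw' h.
  + move=> h. rewrite ltrD2r in h.
    have -> : w.2 + (3 * m%:Z + 4) * (4 ^ m)%N%:Z - (w'.2 + (3 * m%:Z + 4) * (4 ^ m)%N%:Z) = w.2 - w'.2 by ring.
    have -> : w.1 + 3 * (4 ^ m)%N%:Z - (w'.1 + 3 * (4 ^ m)%N%:Z) = w.1 - w'.1 by ring.
    exact: slope Hw' Hw h.
  + apply/negP => /eqP e; move/eqP: hw; apply; exact: (addIr _ e).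
- move=> p q x /sY Hp /sY Hq hne /mem_shift [w /sX Hw ->].
  have hp : p.1 != q.1.
    apply/negP => /eqP e; move: hne; by rewrite (distinct Hp Hq e) eqxx.
  have [c1 c2] := cross Hp Hw.
  apply: (@above_gen (m%:Z + 1)) => //=.
  + move=> h; exact: slope Hp Hq h.
  + move=> h; exact: slope Hq Hp h.
Qed.

Lemma zero_in m : (0, 0) \in P m.
Proof. elim: m => [|m IH]; first by rewrite inE. by rewrite P_succ mem_cat IH. Qed.

Lemma S_sub k l : {subset S k l <= P (k + l).-1}.
Proof.
elim: k l => [|k IHk] l.
  by move=> z; rewrite inE => /eqP ->; exact: zero_in.
elim: l => [|l IHl].
  by move=> z; rewrite inE => /eqP ->; exact: zero_in.
move=> z /=.
case: ifP => _.
  by rewrite inE => /eqP ->; exact: zero_in.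
rewrite mem_cat => /orP [H|H].
  have := IHk l.+1 z H.
  by rewrite addnS (P_succ (k+l)) /= mem_cat => ->.
move: H; rewrite addnS (P_succ (k+l)) mem_cat => /mapP [x Hx ->]; apply/orP; right.
apply: map_f; have := IHl x Hx; by rewrite addSn.
Qed.

Theorem proposition2 (k l : nat) : (0 < k)%N -> (0 < l)%N ->
  (forall k' l', (2 < k' <= k)%N -> (2 < l' <= l)%N ->
     right_of (SR k' l') (SL k' l') /\ high_above (SR k' l') (SL k' l')) /\
  {subset S k l <= P (k + l).-1}.
Proof.
move=> _ _; split; last exact: S_sub.
move=> k' l' /andP [hk _] /andP [hl _].
have e : (k' + l').-1 = (k' + l' - 2).+1 by lia.
rewrite /SR /SL e; apply: sep.
- have := S_sub k' l'.-1; have -> : (k' + l'.-1).-1 = (k' + l' - 2)%N by lia. done.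
- have := S_sub k'.-1 l'; have -> : (k'.-1 + l').-1 = (k' + l' - 2)%N by lia. done.
Qed.
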